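(* Let $F(X)\in\mathbb{Z}[X]$ be monic irreducible of degree $d$ with fixed root $\xi$, $L=\mathbb{Q}(\xi)$ Galois over $\mathbb{Q}$ with group $G$, and $\{\sigma\xi\}_{\sigma\in G}$ a normal basis of $L$. Let $K_1,\dots,K_r$ be the conjugacy classes of $G$, $\Gamma=[X_{\sigma\tau^{-1}}]_{\sigma,\tau\in G}$, $\partial_\tau=\frac{1}{|G|}\frac{\partial\det\Gamma}{\partial X_\tau}$, and let $\partial_\tau(\xi)$, $\det\Gamma_\xi$ be the values under $X_\sigma\mapsto\sigma\xi$. For $i\ge0$ and $1\le j\le r$ set $$a_{K_j,i}=\frac{1}{\det\Gamma_\xi}\sum_{\sigma\in G}\sum_{\tau\in K_j}\sigma(\xi^i)\,\partial_{\sigma\tau}(\xi).$$ Then $a_{K_j,i}\in\mathbb{Q}$ for all $i\ge0$ and all $j$. *)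

(* Defs.v *)
From HB Require Import structures.
From mathcomp Require Import all_boot all_order all_algebra all_fingroup all_field.
From mathcomp Require Import mpoly.
Set Implicit Arguments. Unset Strict Implicit. Unset Printing Implicit Defensive.
Import GRing.Theory.
Local Open Scope ring_scope.

Section Defs.
Variable L : splittingFieldType rat.

Definition galG : {group gal_of {:L}} := 'Gal({:L} / 1)%G.

(* Indexing the variables X_sigma (sigma in G) by 'I_|G|. *)
Definition gidx (s : gal_of {:L}) : 'I_#|galG| := enum_rank_in (group1 galG) s.
Definition gval (i : 'I_#|galG|) : gal_of {:L} := enum_val i.

Definition Gamma : 'M[{mpoly L[#|galG|]}]_#|galG| :=
  \matrix_(i, j) 'X_(gidx (gval i * (gval j)^-1)%g).

Definition dGamma (t : gal_of {:L}) : {mpoly L[#|galG|]} :=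
  (#|galG|%:R)^-1 *: (\det Gamma)^`M(gidx t).

Definition specxi (xi : L) : 'I_#|galG| -> L := fun i => gval i xi.

Definition a_coef (xi : L) (K : {set gal_of {:L}}) (i : nat) : L :=
  ((\det Gamma).@[specxi xi])^-1 *
  \sum_(s in galG) \sum_(t in K) s (xi ^+ i) * (dGamma (s * t)%g).@[specxi xi].
End Defs.

(* Main.v *)
Require Import Defs.
From HB Require Import structures.
From mathcomp Require Import all_boot all_order all_algebra all_fingroup all_field.
From mathcomp Require Import mpoly.
Import GRing.Theory.
Local Open Scope ring_scope.

Lemma mderivXU n (R : comRingType) (i j : 'I_n) :
  ('X_i : {mpoly R[n]})^`M(j) = (i == j)%:R.
Proof.
rewrite mderivX mnm1E; case: eqP => [->|_]; last by rewrite scale0r.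
have -> : (U_(j) - U_(j) = 0)%MM by apply/mnmP => k; rewrite mnmBE subnn mnm0E.
by rewrite scale1r mpolyX0.
Qed.

Lemma chain_rule n (R : comRingType) (s : {perm 'I_n}) (j : 'I_n) (p0 : {mpoly R[n]}) :
  (p0 \mPo [tuple 'X_(s i) | i < n])^`M(j) = (p0^`M((s^-1)%g j)) \mPo [tuple 'X_(s i) | i < n].
Proof.
set lq := [tuple _ | i < n].
pose Q (p : {mpoly R[n]}) := (p \mPo lq)^`M(j) = (p^`M((s^-1)%g j)) \mPo lq.
have QD p q : Q p -> Q q -> Q (p + q).
  by rewrite /Q => Hp Hq; rewrite comp_mpolyD !mderivD Hp Hq comp_mpolyD.
have QM p q : Q p -> Q q -> Q (p * q).
  by rewrite /Q => Hp Hq; rewrite rmorphM mderivM Hp Hq mderivM rmorphD !rmorphM.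
have QZ c p : Q p -> Q (c *: p).
  by rewrite /Q => Hp; rewrite comp_mpolyZ mderivZ Hp mderivZ comp_mpolyZ.
have Q1 : Q 1 by rewrite /Q rmorph1 -mpolyC1 !mderivC raddf0.
have QX i : Q 'X_i.
  rewrite /Q comp_mpolyXU -tnth_nth tnth_mktuple !mderivXU.
  rewrite -!mpolyC_nat comp_mpolyC; congr (_%:R%:MP).
  congr nat_of_bool; apply/eqP/eqP => [<-|->]; by rewrite ?permK ?permKV.
have QXm m : Q 'X_[m].
  rewrite mpolyXE_id; apply: (big_ind Q) => // i _.
  by elim: (m i) => [|e IH]; rewrite ?expr0 ?exprS //; apply: QM.
elim/mpolyind: p0 => [|c m q _ _ Hq]; first by rewrite /Q !raddf0.
by apply: QD => //; apply: QZ.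
Qed.

Section Main.
Variable L : splittingFieldType rat.

Lemma galG_all (x : gal_of {:L}) : x \in galG L.
Proof. by rewrite /galG /= gal_kHom ?sub1v // k1AHom. Qed.

Lemma gvalK : cancel (Defs.gval (L:=L)) (Defs.gidx (L:=L)).
Proof. by move=> i; rewrite /Defs.gval /Defs.gidx enum_valK_in. Qed.

Lemma gidxK : cancel (Defs.gidx (L:=L)) (Defs.gval (L:=L)).
Proof. by move=> s; rewrite /Defs.gval /Defs.gidx enum_rankK_in // galG_all. Qed.

Lemma gal_meval (g : gal_of {:L}) n (p : {mpoly L[n]}) v :
  g (p.@[v]) = (map_mpoly g p).@[fun i => g (v i)].
Proof.
elim/mpolyind: p => [|c m q _ _ IH]; first by rewrite !raddf0.
rewrite !(mevalD, rmorphD) /= map_mpolyZ map_mpolyX !mevalZ !mevalX rmorphM rmorph_prod IH.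
by congr (_ * _ + _); apply: eq_bigr => i _; rewrite rmorphXn.
Qed.

Lemma map_det (g : gal_of {:L}) : map_mpoly g (\det (Gamma L)) = \det (Gamma L).
Proof.
rewrite -det_map_mx; congr (\det _); apply/matrixP => i j; rewrite !mxE.
exact: map_mpolyX.
Qed.

Lemma map_deriv (g : gal_of {:L}) n (p : {mpoly L[n]}) i :
  map_mpoly g (p^`M(i)) = (map_mpoly g p)^`M(i).
Proof.
by apply/mpolyP => m; rewrite mcoeff_map_mpoly !mcoeff_deriv mcoeff_map_mpoly raddfMn.
Qed.

Definition rho (g : gal_of {:L}) := fun i : 'I_#|galG L| => Defs.gidx (Defs.gval i * g)%g.

Lemma rho_inj g : injective (rho g).
Proof.
move=> i j /(congr1 (Defs.gval (L:=L))); rewrite /rho !gidxK => /mulIg.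
by move/(congr1 (Defs.gidx (L:=L))); rewrite !gvalK.
Qed.

Definition rhop g : {perm 'I_#|galG L|} := perm (@rho_inj g).

Definition lq g := [tuple 'X_(rhop g i) | i < #|galG L|] : _.-tuple {mpoly L[#|galG L|]}.

Definition cinv (g : gal_of {:L}) := fun j : 'I_#|galG L| => Defs.gidx (g^-1 * Defs.gval j)%g.

Lemma cinv_inj g : injective (cinv g).
Proof.
move=> i j /(congr1 (Defs.gval (L:=L))); rewrite /cinv !gidxK => /mulgI.
by move/(congr1 (Defs.gidx (L:=L))); rewrite !gvalK.
Qed.

Lemma det_comp g : exists e : L, e * e = 1 /\
  \det (Gamma L) \mPo lq g = e *: \det (Gamma L).
Proof.
pose s : {perm 'I_#|galG L|} := perm (@cinv_inj g).
exists ((-1) ^+ (s^-1)%g); split; first by rewrite -expr2 sqrr_sign.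
rewrite -det_map_mx.
have -> : map_mx (comp_mpoly (lq g)) (Gamma L) = col_perm s (Gamma L).
  apply/matrixP => i j; rewrite !mxE comp_mpolyXU -tnth_nth tnth_mktuple.
  rewrite permE /rho /s permE /cinv !gidxK invMg invgK mulgA; congr ('X_(Defs.gidx _)).
by rewrite col_permE det_mulmx det_perm mulrC -mul_mpolyC rmorphXn rmorphN1.
Qed.


Lemma spec_gal (xi : L) (g : gal_of {:L}) :
  (fun i => g (specxi xi i)) =1 (fun i => (tnth (lq g) i).@[specxi xi]).
Proof.
by move=> i; rewrite tnth_mktuple mevalXU /specxi permE /rho gidxK galM ?memvf.
Qed.

Lemma gal_det (xi : L) (g : gal_of {:L}) (e : L) : \det (Gamma L) \mPo lq g = e *: \det (Gamma L) ->
  g ((\det (Gamma L)).@[specxi xi]) = e * (\det (Gamma L)).@[specxi xi].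
Proof.
move=> H; rewrite gal_meval map_det (meval_eq _ (spec_gal xi g)).
by rewrite -comp_mpoly_meval H mevalZ.
Qed.

Lemma gal_dG (xi : L) (g : gal_of {:L}) (e : L) (u : gal_of {:L}) : \det (Gamma L) \mPo lq g = e *: \det (Gamma L) ->
  g ((dGamma u).@[specxi xi]) = e * (dGamma (u * g)%g).@[specxi xi].
Proof.
move=> H; rewrite gal_meval /dGamma map_mpolyZ map_deriv map_det fmorphV rmorph_nat.
rewrite (meval_eq _ (spec_gal xi g)) -comp_mpoly_meval comp_mpolyZ.
have -> : (\det (Gamma L))^`M(Defs.gidx u) \mPo lq g
    = e *: (\det (Gamma L))^`M(Defs.gidx (u * g)%g).
  rewrite -{1}(permK (rhop g) (Defs.gidx u)) /lq -chain_rule -/(lq g) H mderivZ.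
  by rewrite permE /rho gidxK.
by rewrite !mevalZ mulrCA.
Qed.

End Main.

Theorem corollary4p5 (L : splittingFieldType rat) (F : {poly int}) (xi : L) :
  F \is monic ->
  irreducible_poly (map_poly intr F : {poly rat}) ->
  root (map_poly intr F) xi ->
  <<1%VS; xi>>%VS = fullv ->
  galois 1%VS {:L} ->
  basis_of fullv (map (fun s : gal_of {:L} => s xi) (enum (galG L))) ->
  forall (K : {set gal_of {:L}}), K \in classes (galG L) ->
  forall i : nat, a_coef xi K i \in 1%VS.
Proof.
move=> _ _ _ _ Hgal _ K HK i.
have /galois_fixedField Hfix := Hgal.
rewrite -Hfix; apply/fixedFieldP; first exact: memvf.
move=> g Gg.
have [e [ee He]] := @det_comp L g.
have e0 : e != 0.
  by apply/eqP => e0; move: ee; rewrite e0 mul0r => /eqP; rewrite eq_sym oner_eq0.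
case/imsetP: HK => x Gx ->.
rewrite /a_coef rmorphM fmorphV /= (@gal_det L xi g e He) rmorph_sum /=.
rewrite invfM [e^-1 * _]mulrC -mulrA; congr (_ * _).
have E : forall s, s \in galG L ->
    g (\sum_(t in (x ^: galG L)%g) s (xi ^+ i) * (dGamma (s * t)%g).@[specxi xi]) =
    e * \sum_(t in (x ^: galG L)%g) (s * g)%g (xi ^+ i) * (dGamma (s * g * t)%g).@[specxi xi].
  move=> s Gs; rewrite rmorph_sum mulr_sumr.
  rewrite [LHS](reindex_inj (@conjg_inj _ (g^-1)%g)); apply: eq_big => [t|t _].
    by rewrite memJ_norm // (subsetP (class_norm x _)) // groupV.
  have -> : (s * t ^ g^-1 = s * g * t * g^-1)%g by rewrite conjgE invgK !mulgA.
  rewrite rmorphM /= galM ?memvf // mulrCA; congr (_ * _).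
  have := @gal_dG L xi g e (s * g * t * g^-1)%g He; rewrite mulgKV; exact.
transitivity (e^-1 * \sum_(s in galG L) (e * \sum_(t in (x ^: galG L)%g)
    (s * g)%g (xi ^+ i) * (dGamma (s * g * t)%g).@[specxi xi])).
  congr (_ * _); rewrite rmorph_sum; apply: eq_bigr => s Gs; exact: E s Gs.
rewrite -mulr_sumr mulrA mulVf // mul1r.
rewrite [RHS](reindex_inj (mulIg g)); apply: eq_bigl => s.
by rewrite !(@galG_all L).
Qed.
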